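(* Let $R$ be a unital associative ring and $M\in{\cal S}$. Then $M^{-1}\in{\cal S}$.
   Context: For $M\in M_3(R)$ with all entries invertible, $J_2(M)$ is the matrix with $(j,k)$-entry $(M_{kj})^{-1}$. ${\cal S}=\{M\in M_3(R):$ all square submatrices of $M$ (including $1\times1$ ones and $M$ itself) are invertible and $J_2(M)$ is invertible$\}$. *)

(* Defs.v *)
From mathcomp Require Import all_boot all_order all_algebra.
Set Implicit Arguments. Unset Strict Implicit. Unset Printing Implicit Defensive.
Import GRing.Theory.
Local Open Scope ring_scope.

Definition mx_invertible (R : unitRingType) (n : nat) (A : 'M[R]_n) : Prop :=
  exists B : 'M[R]_n, A *m B = 1%:M /\ B *m A = 1%:M.

Definition J2 (R : unitRingType) (M : 'M[R]_3) : 'M[R]_3 :=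
  \matrix_(j < 3, k < 3) (M k j)^-1.

Definition sq_submx (R : unitRingType) (M : 'M[R]_3) (k : nat)
  (f g : 'I_k -> 'I_3) : 'M[R]_k := mxsub f g M.

Definition strict_incr (k : nat) (f : 'I_k -> 'I_3) : Prop :=
  forall i j : 'I_k, (i < j)%N -> (f i < f j)%N.

Definition inS (R : unitRingType) (M : 'M[R]_3) : Prop :=
  (forall i j, M i j \is a GRing.unit) /\
  (forall (k : nat) (f g : 'I_k -> 'I_3),
      (0 < k)%N -> strict_incr f -> strict_incr g ->
      mx_invertible (sq_submx M f g)) /\
  mx_invertible (J2 M).

(* Main.v *)
Require Import Defs.
From mathcomp Require Import all_boot all_order all_algebra.
From Stdlib Require Import Setoid.
From mathcomp Require Import zify.
Set Implicit Arguments. Unset Strict Implicit. Unset Printing Implicit Defensive.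
Import GRing.Theory.
Local Open Scope ring_scope.

Section S.
Variable R : unitRingType.

Lemma mxinv_mul n (A B : 'M[R]_n) :
  mx_invertible A -> mx_invertible B -> mx_invertible (A *m B).
Proof.
move=> [A' [h1 h2]] [B' [h3 h4]]; exists (B' *m A'); split.
  by rewrite mulmxA -(mulmxA A) h3 mulmx1 h1.
by rewrite mulmxA -(mulmxA B') h2 mulmx1 h4.
Qed.

Lemma schur_block p q (a : 'M[R]_p) (b : 'M[R]_(p,q)) c d (a' : 'M_p) :
  a *m a' = 1%:M -> a' *m a = 1%:M ->
  (mx_invertible (block_mx a b c d) <-> mx_invertible (d - c *m a' *m b)).
Proof.
move=> ha1 ha2; split.
  move=> [Z [h1 h2]]; rewrite -[Z]submxK in h1 h2.
  move: h1 h2; set z1 := ulsubmx Z; set z2 := ursubmx Z; set z3 := dlsubmx Z;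
    set z4 := drsubmx Z.
  rewrite !mulmx_block scalar_mx_block.
  move=> /eq_block_mx[e1 e2 e3 e4] /eq_block_mx[f1 f2 f3 f4].
  exists z4; split.
    have hz2 : a' *m b *m z4 = - z2.
      have hb : b *m z4 = - (a *m z2) by apply/eqP; rewrite -subr_eq0 opprK addrC e2.
      by rewrite -mulmxA hb mulmxN mulmxA ha2 mul1mx.
    by rewrite mulmxBl -!mulmxA (mulmxA a') hz2 mulmxN opprK addrC.
  have hz3 : z4 *m c *m a' = - z3.
    have hc : z4 *m c = - (z3 *m a) by apply/eqP; rewrite -subr_eq0 opprK addrC f3.
    by rewrite hc mulNmx -mulmxA ha1 mulmx1.
  by rewrite mulmxBr !mulmxA hz3 mulNmx opprK addrC.
move=> [S [h1 h2]].
set s := d - c *m a' *m b.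
have -> : block_mx a b c d =
   block_mx 1%:M 0 (c *m a') 1%:M *m block_mx a 0 0 s *m block_mx 1%:M (a' *m b) 0 1%:M.
  rewrite !mulmx_block !mulmx0 !mul0mx !mul1mx !mulmx1 !addr0 !add0r.
  by rewrite !mulmxA ha1 mul1mx -(mulmxA c) ha2 mulmx1 /s addrC subrK.
apply: mxinv_mul; first apply: mxinv_mul.
- exists (block_mx 1%:M 0 (- (c *m a')) 1%:M).
  by rewrite !mulmx_block !mulmx0 !mul0mx !mul1mx !mulmx1 !addr0 !add0r
     subrr addrC subrr -scalar_mx_block.
- exists (block_mx a' 0 0 S).
  by rewrite !mulmx_block !mulmx0 !mul0mx !addr0 !add0r ha1 ha2 h1 h2 -scalar_mx_block.
- exists (block_mx 1%:M (- (a' *m b)) 0 1%:M).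
  by rewrite !mulmx_block !mulmx0 !mul0mx !mul1mx !mulmx1 !addr0 !add0r
     subrr addrC subrr -scalar_mx_block.
Qed.

Lemma schur p q (A : 'M[R]_(p+q)) (a' : 'M_p) :
  ulsubmx A *m a' = 1%:M -> a' *m ulsubmx A = 1%:M ->
  (mx_invertible A <-> mx_invertible (drsubmx A - dlsubmx A *m a' *m ursubmx A)).
Proof. by move=> h1 h2; have := schur_block (ursubmx A) (dlsubmx A) (drsubmx A) h1 h2; rewrite submxK. Qed.


Lemma mx1_inv (A : 'M[R]_1) : mx_invertible A <-> A ord0 ord0 \is a GRing.unit.
Proof.
split.
  move=> [B [h1 h2]]; apply/unitrP; exists (B ord0 ord0).
  move/matrixP: h1 => /(_ ord0 ord0); move/matrixP: h2 => /(_ ord0 ord0).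
  by rewrite !mxE !big_ord1 /= => -> ->.
move=> hu; exists ((A ord0 ord0)^-1)%:M; split; apply/matrixP=> i j;
  rewrite (ord1 i) (ord1 j) !mxE big_ord1 !mxE /=.
  by rewrite mulr1n divrr.
by rewrite mulr1n mulVr.
Qed.

Lemma compl p q (M N : 'M[R]_(p+q)) :
  M *m N = 1%:M -> N *m M = 1%:M ->
  mx_invertible (drsubmx M) -> mx_invertible (ulsubmx N).
Proof.
rewrite -[M]submxK -[N]submxK !mulmx_block scalar_mx_block !block_mxKdr !block_mxKul.
set A := ulsubmx M; set B := ursubmx M; set C := dlsubmx M; set D := drsubmx M.
set P := ulsubmx N; set Q := ursubmx N; set S := dlsubmx N; set T := drsubmx N.
move=> /eq_block_mx[e1 e2 e3 e4] /eq_block_mx[f1 f2 f3 f4] [Di [d1 d2]].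
exists (A - B *m Di *m C); split.
  have hq : P *m B *m Di = - Q.
    have hb : P *m B = - (Q *m D) by apply/eqP; rewrite -subr_eq0 opprK f2.
    by rewrite hb mulNmx -mulmxA d1 mulmx1.
  by rewrite mulmxBr !mulmxA hq mulNmx opprK.
have hs : Di *m C *m P = - S.
  have hc : C *m P = - (D *m S) by apply/eqP; rewrite -subr_eq0 opprK e3.
  by rewrite -mulmxA hc mulmxN mulmxA d2 mul1mx.
by rewrite mulmxBl -!mulmxA (mulmxA Di) hs mulmxN opprK.
Qed.

Lemma mxsub_inv n m (M N : 'M[R]_n) (s t : 'I_m -> 'I_n) :
  M *m N = 1%:M -> bijective s -> injective t ->
  mxsub t s M *m mxsub s t N = 1%:M.
Proof.
move=> h bs it; apply/matrixP => i j; rewrite [LHS]mxE.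
transitivity ((M *m N) (t i) (t j)); last by rewrite h !mxE (inj_eq it).
rewrite [RHS]mxE (reindex s) /=; last exact: onW_bij.
by apply: eq_bigr => k _; rewrite !mxE.
Qed.

Notation i0 := (@Ordinal 2 0 isT).
Notation i1 := (@Ordinal 2 1 isT).

Lemma mx2_inv (A : 'M[R]_2) : A i0 i0 \is a GRing.unit ->
  (mx_invertible A <-> (A i1 i1 - A i1 i0 * (A i0 i0)^-1 * A i0 i1) \is a GRing.unit).
Proof.
move=> hu.
have el : lshift 1 (ord0 : 'I_1) = i0 :> 'I_2 by apply/val_inj.
have er : rshift 1 (ord0 : 'I_1) = i1 :> 'I_2 by apply/val_inj.
have h1 : ulsubmx (A : 'M_(1+1)) *m ((A i0 i0)^-1)%:M = 1%:M.
  apply/matrixP=> i j; rewrite (ord1 i) (ord1 j) !mxE big_ord1 !mxE el /=.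
  by rewrite mulr1n divrr.
have h2 : ((A i0 i0)^-1)%:M *m ulsubmx (A : 'M_(1+1)) = 1%:M.
  apply/matrixP=> i j; rewrite (ord1 i) (ord1 j) !mxE big_ord1 !mxE el /=.
  by rewrite mulr1n mulVr.
rewrite (schur h1 h2) mx1_inv !mxE big_ord1 !mxE big_ord1 !mxE el er /=.
by rewrite mulr1n.
Qed.

Lemma minor_via p q (M N : 'M[R]_(p+q)) (s t : 'I_(p+q) -> 'I_(p+q))
  (f g : 'I_p -> 'I_(p+q)) :
  M *m N = 1%:M -> N *m M = 1%:M -> injective s -> injective t ->
  (forall i, s (lshift q i) = f i) -> (forall i, t (lshift q i) = g i) ->
  mx_invertible (mxsub (fun i => t (rshift p i)) (fun i => s (rshift p i)) M) ->
  mx_invertible (mxsub f g N).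
Proof.
move=> MN NM is0 it hs ht hM.
have bs : bijective s by by apply: injF_bij.
have bt : bijective t by by apply: injF_bij.
have e1 := mxsub_inv MN bs it.
have e2 := mxsub_inv NM bt is0.
have := compl e1 e2.
have -> : drsubmx (mxsub t s M) = mxsub (fun i => t (rshift p i)) (fun i => s (rshift p i)) M.
  by apply/matrixP=> i j; rewrite !mxE.
have -> : ulsubmx (mxsub s t N) = mxsub f g N.
  by apply/matrixP=> i j; rewrite !mxE hs ht.
by apply.
Qed.

Definition mkp (a b c : 'I_3) (i : 'I_3) : 'I_3 :=
  if val i == 0%N then a else if val i == 1%N then b else c.

Lemma mkp_inj (a b c : 'I_3) : a != b -> a != c -> b != c -> injective (mkp a b c).
Proof.
move=> ab ac bc [[|[|[|i]]] hi] [[|[|[|j]]] hj] //=; rewrite /mkp /= => e;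
  try (by apply/val_inj);
  try (by rewrite e eqxx in ab); try (by rewrite e eqxx in ac);
  try (by rewrite e eqxx in bc).
Qed.

Definition HMin (M : 'M[R]_3) := forall (k : nat) (f g : 'I_k -> 'I_3),
      (0 < k)%N -> strict_incr f -> strict_incr g ->
      mx_invertible (sq_submx M f g).

Lemma minor1 (M N : 'M[R]_3) (f g : 'I_1 -> 'I_3) (r1 r2 c1 c2 : 'I_3) :
  M *m N = 1%:M -> N *m M = 1%:M -> HMin M ->
  (r1 < r2)%N -> (c1 < c2)%N ->
  f ord0 != r1 -> f ord0 != r2 -> g ord0 != c1 -> g ord0 != c2 ->
  mx_invertible (sq_submx N f g).
Proof.
move=> MN NM HM r12 c12 f1 f2 g1 g2.
have r12' : r1 != r2 by rewrite neq_ltn r12.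
have c12' : c1 != c2 by rewrite neq_ltn c12.
apply: (@minor_via 1 2 M N (mkp (f ord0) r1 r2) (mkp (g ord0) c1 c2)) => //.
- exact: mkp_inj.
- exact: mkp_inj.
- by move=> i; rewrite (ord1 i).
- by move=> i; rewrite (ord1 i).
apply: HM => //.
  by move=> [[|[|i]] hi] [[|[|j]] hj] //=.
by move=> [[|[|i]] hi] [[|[|j]] hj] //=.
Qed.

Lemma minor2 (M N : 'M[R]_3) (f g : 'I_2 -> 'I_3) (r c : 'I_3) :
  M *m N = 1%:M -> N *m M = 1%:M -> HMin M ->
  strict_incr f -> strict_incr g ->
  f i0 != r -> f i1 != r -> g i0 != c -> g i1 != c ->
  mx_invertible (sq_submx N f g).
Proof.
move=> MN NM HM sf sg f1 f2 g1 g2.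
have f01 : f i0 != f i1 by rewrite neq_ltn sf.
have g01 : g i0 != g i1 by rewrite neq_ltn sg.
apply: (@minor_via 2 1 M N (mkp (f i0) (f i1) r) (mkp (g i0) (g i1) c)) => //.
- exact: mkp_inj.
- exact: mkp_inj.
- move=> [[|[|i]] hi] //=; rewrite /mkp /=; congr f; exact/val_inj.
- move=> [[|[|i]] hi] //=; rewrite /mkp /=; congr g; exact/val_inj.
apply: HM => //.
  by move=> [[|i] hi] [[|j] hj] //=.
by move=> [[|i] hi] [[|j] hj] //=.
Qed.

Notation o0 := (@Ordinal 3 0 isT).
Notation o1 := (@Ordinal 3 1 isT).
Notation o2 := (@Ordinal 3 2 isT).

Lemma si3 (f : 'I_3 -> 'I_3) : strict_incr f -> forall i, f i = i.
Proof.
move=> sf.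
have h01 := sf o0 o1 isT; have h12 := sf o1 o2 isT.
have h2 := ltn_ord (f o2).
move=> [[|[|[|i]]] hi] //; apply/val_inj => /=.
- have -> : Ordinal hi = o0 by apply/val_inj.
  lia.
- have -> : Ordinal hi = o1 by apply/val_inj.
  lia.
- have -> : Ordinal hi = o2 by apply/val_inj.
  lia.
Qed.


Lemma minorsN (M N : 'M[R]_3) :
  M *m N = 1%:M -> N *m M = 1%:M -> HMin M -> HMin N.
Proof.
move=> MN NM HM [|[|[|[|k]]]] f g // _ sf sg.
- case hf: (f ord0) => [[|[|[|//]]] pf]; case hg: (g ord0) => [[|[|[|//]]] pg];
  first [ by apply: (@minor1 M N f g o1 o2 o1 o2); rewrite ?hf ?hg
        | by apply: (@minor1 M N f g o0 o2 o1 o2); rewrite ?hf ?hg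
        | by apply: (@minor1 M N f g o0 o1 o1 o2); rewrite ?hf ?hg
        | by apply: (@minor1 M N f g o1 o2 o0 o2); rewrite ?hf ?hg
        | by apply: (@minor1 M N f g o0 o2 o0 o2); rewrite ?hf ?hg
        | by apply: (@minor1 M N f g o0 o1 o0 o2); rewrite ?hf ?hg
        | by apply: (@minor1 M N f g o1 o2 o0 o1); rewrite ?hf ?hg
        | by apply: (@minor1 M N f g o0 o2 o0 o1); rewrite ?hf ?hg
        | by apply: (@minor1 M N f g o0 o1 o0 o1); rewrite ?hf ?hg ].
- case hf0: (f i0) => [[|[|[|//]]] p0]; case hf1: (f i1) => [[|[|[|//]]] p1];
  case hg0: (g i0) => [[|[|[|//]]] q0]; case hg1: (g i1) => [[|[|[|//]]] q1];
  first [ by apply: (@minor2 M N f g o0 o0); rewrite ?hf0 ?hf1 ?hg0 ?hg1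
        | by apply: (@minor2 M N f g o0 o1); rewrite ?hf0 ?hf1 ?hg0 ?hg1
        | by apply: (@minor2 M N f g o0 o2); rewrite ?hf0 ?hf1 ?hg0 ?hg1
        | by apply: (@minor2 M N f g o1 o0); rewrite ?hf0 ?hf1 ?hg0 ?hg1
        | by apply: (@minor2 M N f g o1 o1); rewrite ?hf0 ?hf1 ?hg0 ?hg1
        | by apply: (@minor2 M N f g o1 o2); rewrite ?hf0 ?hf1 ?hg0 ?hg1
        | by apply: (@minor2 M N f g o2 o0); rewrite ?hf0 ?hf1 ?hg0 ?hg1
        | by apply: (@minor2 M N f g o2 o1); rewrite ?hf0 ?hf1 ?hg0 ?hg1
        | by apply: (@minor2 M N f g o2 o2); rewrite ?hf0 ?hf1 ?hg0 ?hg1 ].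
- have -> : sq_submx N f g = N.
    by apply/matrixP => i j; rewrite mxE (si3 sf) (si3 sg).
  by exists M.
- have h1 := sf (@Ordinal k.+4 0 isT) (@Ordinal k.+4 1 isT) isT.
  have h2 := sf (@Ordinal k.+4 1 isT) (@Ordinal k.+4 2 isT) isT.
  have h3 := sf (@Ordinal k.+4 2 isT) (@Ordinal k.+4 3 isT) isT.
  have h4 := ltn_ord (f (@Ordinal k.+4 3 isT)).
  lia.
Qed.
End S.

Section S.
Variable R : unitRingType.

Lemma elim3 (a b c x y z p q m e : R) : m \is a GRing.unit ->
  a * p + b * q + c * m = 0 -> a * x + b * y + c * z = e ->
  a * (x - p * m^-1 * z) + b * (y - q * m^-1 * z) = e.
Proof.
move=> hm h1 h2.
have h : a * p + b * q = - (c * m) by apply/eqP; rewrite -subr_eq0 opprK h1.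
rewrite !mulrBr addrACA -opprD !mulrA -mulrDl -mulrDl h mulNr mulrK //.
by rewrite mulNr opprK.
Qed.

Lemma elim3' (a b c x y z p q m e : R) : m \is a GRing.unit ->
  p * a + q * b + m * c = 0 -> x * a + y * b + z * c = e ->
  (x - z * m^-1 * p) * a + (y - z * m^-1 * q) * b = e.
Proof.
move=> hm h1 h2.
have h : p * a + q * b = - (m * c) by apply/eqP; rewrite -subr_eq0 opprK h1.
rewrite !mulrBl addrACA -opprD -!mulrA -mulrDr -mulrDr h mulrN mulKr //.
by rewrite mulrN opprK.
Qed.

Lemma H1 (a b c d x y : R) : d \is a GRing.unit ->
  a * x + b * y = 1 -> c * x + d * y = 0 -> (a - b * d^-1 * c) * x = 1.
Proof.
move=> hd h1 h2.
have hy : y = - (d^-1 * (c * x)).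
  by rewrite -mulrN; apply: (mulrI hd); rewrite mulVKr //; apply/eqP; rewrite -subr_eq0 opprK addrC h2.
have hy' : d^-1 * (c * x) = - y by rewrite hy opprK.
by rewrite mulrBl -!mulrA hy' mulrN opprK.
Qed.

Lemma H2 (a b c d x y : R) : d \is a GRing.unit ->
  x * a + y * c = 1 -> x * b + y * d = 0 -> x * (a - b * d^-1 * c) = 1.
Proof.
move=> hd h1 h2.
have hy : y = - (x * b * d^-1).
  by rewrite -mulNr; apply: (mulIr hd); rewrite mulrVK //; apply/eqP; rewrite -subr_eq0 opprK addrC h2.
have hy' : x * b * d^-1 = - y by rewrite hy opprK.
by rewrite mulrBr !mulrA hy' mulNr opprK.
Qed.

Lemma sum3 (F : 'I_3 -> R) (a b c : 'I_3) : a != b -> a != c -> b != c ->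
  \sum_(k < 3) F k = F a + F b + F c.
Proof.
move=> ab ac bc.
rewrite (bigD1 a) //= (bigD1 b) /=; last by rewrite eq_sym ab.
rewrite (bigD1 c) /=; last by rewrite eq_sym ac eq_sym bc.
rewrite big1 ?addr0 ?addrA // => k.
move: a b c k ab ac bc => [[|[|[|a]]] ha] [[|[|[|b]]] hb] [[|[|[|c]]] hc] [[|[|[|k]]] hk] //.
Qed.

Lemma mxent n (M N : 'M[R]_n) : M *m N = 1%:M -> forall i j,
  \sum_k M i k * N k j = (i == j)%:R.
Proof. by move=> h i j; move/matrixP: h => /(_ i j); rewrite !mxE. Qed.

Lemma key (M N : 'M[R]_3) (o i i' j j' : 'I_3) :
  M *m N = 1%:M -> N *m M = 1%:M ->
  o != i -> o != i' -> i != i' -> o != j -> o != j' -> j != j' ->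
  N j i \is a GRing.unit -> M i' j' \is a GRing.unit ->
  (N o o - N o i * (N j i)^-1 * N j o) * (M o o - M o j' * (M i' j')^-1 * M i' o) = 1 /\
  (M o o - M o j' * (M i' j')^-1 * M i' o) * (N o o - N o i * (N j i)^-1 * N j o) = 1.
Proof.
move=> MN NM oi oi' ii' oj oj' jj' hn hm.
have mn := mxent MN; have nm := mxent NM.
have sN : forall r c, \sum_k N r k * M k c = N r o * M o c + N r i * M i c + N r i' * M i' c.
  by move=> r c; rewrite (sum3 (fun k => N r k * M k c) oi oi' ii').
have sM : forall r c, \sum_k M r k * N k c = M r o * N o c + M r j * N j c + M r j' * N j' c.
  by move=> r c; rewrite (sum3 (fun k => M r k * N k c) oj oj' jj').
split.
  apply: (H1 (y := M i o - M i j' * (M i' j')^-1 * M i' o)) => //.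
    apply: (elim3 (c := N o i') hm).
      by rewrite -sN nm (negbTE oj').
    by rewrite -sN nm eqxx.
  apply: (elim3 (c := N j i') hm).
    by rewrite -sN nm (negbTE jj').
  by rewrite -sN nm eq_sym (negbTE oj).
apply: (H2 (y := M o j - M o j' * (M i' j')^-1 * M i' j)) => //.
  apply: (elim3' (c := N j' o) hm).
    by rewrite -sM mn eq_sym (negbTE oi').
  by rewrite -sM mn eqxx.
apply: (elim3' (c := N j' i) hm).
  by rewrite -sM mn eq_sym (negbTE ii').
by rewrite -sM mn (negbTE oi).
Qed.

Lemma id1 (p w r n : R) : p \is a GRing.unit -> r \is a GRing.unit ->
  w^-1 - p^-1 * n * r^-1 = - (p^-1 * (n - p * w^-1 * r) * r^-1).
Proof.
move=> hp hr.
by rewrite mulrBr mulrBl !mulrA mulVr // mul1r mulrK // opprB.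
Qed.

Lemma unitM3 (a b c : R) : a \is a GRing.unit -> b \is a GRing.unit ->
  c \is a GRing.unit -> a * b * c \is a GRing.unit.
Proof. by move=> ha hb hc; rewrite !unitrMl. Qed.

Lemma final_alg (A B C D k11 k12 k21 k22 : R) :
  A \is a GRing.unit -> B \is a GRing.unit -> C \is a GRing.unit -> D \is a GRing.unit ->
  k12 \is a GRing.unit -> k21 \is a GRing.unit -> k22 \is a GRing.unit ->
  k11 \is a GRing.unit -> 
  k22 - k21 * k11^-1 * k12 \is a GRing.unit ->
  (A * k11^-1 * D) - (A * k21^-1 * B) * (C * k22^-1 * B)^-1 * (C * k12^-1 * D)
    \is a GRing.unit.
Proof.
move=> hA hB hC hD h12 h21 h22 h11 hs.
have -> : (C * k22^-1 * B)^-1 = B^-1 * k22 * C^-1.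
  by rewrite invrM ?unitrMl ?unitrV // invrM ?unitrV // invrK mulrA.
have -> : (A * k21^-1 * B) * (B^-1 * k22 * C^-1) * (C * k12^-1 * D)
   = A * (k21^-1 * k22 * k12^-1) * D.
  rewrite !mulrA mulrK // -!mulrA; congr (_ * _); congr (_ * _); congr (_ * _).
  by rewrite mulKr.
rewrite -(mulrA A) -(mulrA A) -mulrBr -mulrBl.
have -> : k11^-1 - k21^-1 * k22 * k12^-1 = - (k21^-1 * (k22 - k21 * k11^-1 * k12) * k12^-1).
  rewrite mulrBr mulrBl !mulrA mulVr // mul1r mulrK // opprB; done.
rewrite unitrMr // unitrMl // unitrN; apply: unitM3; rewrite ?unitrV //.
Qed.
End S.

Section S.
Variable R : unitRingType.
Notation i0 := (@Ordinal 2 0 isT).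
Notation i1 := (@Ordinal 2 1 isT).
Notation o0 := (@Ordinal 3 0 isT).
Notation o1 := (@Ordinal 3 1 isT).
Notation o2 := (@Ordinal 3 2 isT).

Definition kT (T : 'M[R]_3) (a b : 'I_3) :=
  (T b a)^-1 - (T o0 a)^-1 * T o0 o0 * (T b o0)^-1.

Lemma id2 (n p w r : R) : n \is a GRing.unit -> r \is a GRing.unit -> w \is a GRing.unit ->
  n - p * w^-1 * r = n * r^-1 * (w - r * n^-1 * p) * w^-1 * r.
Proof.
move=> hn hr hw.
rewrite mulrBr mulrBl mulrBl !mulrA.
by rewrite mulrK // mulrVK // divrr // mul1r.
Qed.

Lemma kT_unit (T : 'M[R]_3) : (forall i j, T i j \is a GRing.unit) -> HMin T ->
  forall a b, a != o0 -> b != o0 -> kT T a b \is a GRing.unit.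
Proof.
move=> uT HT a b ha hb.
pose f := fun x : 'I_2 => if val x == 0%N then o0 else b.
pose g := fun x : 'I_2 => if val x == 0%N then o0 else a.
have := HT 2 f g isT.
have sf : strict_incr f.
  move=> [[|[|x]] hx] [[|[|y]] hy] //= _; rewrite /f /=; by rewrite lt0n.
have sg : strict_incr g.
  move=> [[|[|x]] hx] [[|[|y]] hy] //= _; rewrite /g /=; by rewrite lt0n.
move=> /(_ sf sg).
rewrite (mx2_inv (A := sq_submx T f g)); last by rewrite mxE.
rewrite !mxE /f /g /= => hs.
rewrite /kT id1 // id2 // unitrN; apply: unitM3; rewrite ?unitrV //.
rewrite !unitrMl ?unitrV //.
Qed.

Lemma kq_form (M N : 'M[R]_3) (i i' j j' : 'I_3) :
  M *m N = 1%:M -> N *m M = 1%:M ->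
  o0 != i -> o0 != i' -> i != i' -> o0 != j -> o0 != j' -> j != j' ->
  (forall a b, M a b \is a GRing.unit) -> (forall a b, N a b \is a GRing.unit) ->
  kT M j' i' \is a GRing.unit ->
  kT N i j = (N o0 i)^-1 * (M i' o0)^-1 * (kT M j' i')^-1 * (M o0 j')^-1 * (N j o0)^-1.
Proof.
move=> MN NM oi oi' ii' oj oj' jj' uM uN uk.
have [h1 h2] := key MN NM oi oi' ii' oj oj' jj' (uN j i) (uM i' j').
set u := N o0 o0 - _ in h1 h2; set X := M o0 o0 - _ in h1 h2.
have hX : X \is a GRing.unit by apply/unitrP; exists u.
have eu : u = X^-1 by rewrite -[u]mulr1 -(divrr hX) mulrA h1 mul1r.
have eX : X = - (M o0 j' * kT M j' i' * M i' o0).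
  rewrite /kT id1 // mulrN mulNr opprK !mulrA divrr // mul1r mulrVK //.
rewrite /kT id1 // -/u eu eX invrN !invrM ?unitrMl //.
by rewrite mulrN mulNr opprK !mulrA.
Qed.

Lemma J2_inv (T : 'M[R]_3) : (forall i j, T i j \is a GRing.unit) ->
  kT T o1 o1 \is a GRing.unit ->
  (mx_invertible (J2 T) <->
   (kT T o2 o2 - kT T o2 o1 * (kT T o1 o1)^-1 * kT T o1 o2) \is a GRing.unit).
Proof.
move=> uT uk.
have el : lshift 2 (ord0 : 'I_1) = o0 :> 'I_3 by apply/val_inj.
have h1 : ulsubmx (J2 T : 'M_(1+2)) *m (T o0 o0)%:M = 1%:M.
  apply/matrixP=> i j; rewrite (ord1 i) (ord1 j) !mxE big_ord1 !mxE el /=.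
  by rewrite mulr1n mulVr.
have h2 : (T o0 o0)%:M *m ulsubmx (J2 T : 'M_(1+2)) = 1%:M.
  apply/matrixP=> i j; rewrite (ord1 i) (ord1 j) !mxE big_ord1 !mxE el /=.
  by rewrite mulr1n divrr.
rewrite (schur h1 h2).
set K := drsubmx _ - _.
have eK : forall x y, K x y = kT T (rshift 1 x) (rshift 1 y).
  move=> x y; rewrite /K !mxE big_ord1 !mxE big_ord1 !mxE el /= mulr1n.
  by rewrite /kT.
have e1 : rshift 1 i0 = o1 :> 'I_3 by apply/val_inj.
have e2 : rshift 1 i1 = o2 :> 'I_3 by apply/val_inj.
rewrite mx2_inv; last by rewrite eK e1.
by rewrite !eK e1 e2.
Qed.
End S.

Unset Implicit Arguments.
Notation o0 := (@Ordinal 3 0 isT).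
Notation o1 := (@Ordinal 3 1 isT).
Notation o2 := (@Ordinal 3 2 isT).

Theorem lemma11 (R : unitRingType) (M N : 'M[R]_3) :
  inS M -> M *m N = 1%:M -> N *m M = 1%:M -> inS N.
Proof.
move=> [uM [HM HJ]] MN NM.
have HN : HMin N := minorsN MN NM HM.
have uN : forall i j, N i j \is a GRing.unit.
  move=> i j; have := HN 1%N (fun _ => i) (fun _ => j) isT.
  have s1 : forall h : 'I_1 -> 'I_3, strict_incr h by move=> h [[|?]?] [[|?]?].
  by move=> /(_ (s1 _) (s1 _)); rewrite mx1_inv mxE.
split; first exact uN.
split; first exact HN.
have ukM := kT_unit uM HM.
have ukN := kT_unit uN HN.
have sP := (J2_inv uM (ukM o1 o1 isT isT)).1 HJ.
apply/(J2_inv uN (ukN o1 o1 isT isT)).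
rewrite [kT N o2 o2](@kq_form _ M N o2 o1 o2 o1) //; last exact: ukM.
rewrite [kT N o2 o1](@kq_form _ M N o2 o1 o1 o2) //; last exact: ukM.
rewrite [kT N o1 o1](@kq_form _ M N o1 o2 o1 o2) //; last exact: ukM.
rewrite [kT N o1 o2](@kq_form _ M N o1 o2 o2 o1) //; last exact: ukM.
have := @final_alg _ ((N o0 o2)^-1 * (M o1 o0)^-1) ((M o0 o2)^-1 * (N o1 o0)^-1)
   ((N o0 o1)^-1 * (M o2 o0)^-1) ((M o0 o1)^-1 * (N o2 o0)^-1)
   (kT M o1 o1) (kT M o1 o2) (kT M o2 o1) (kT M o2 o2).
rewrite !mulrA; apply; rewrite ?unitrMl ?unitrV //; exact: ukM.
Qed.
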